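(* Let $n\ge 3$, let $K_n$ be the complete graph on $n$ vertices, and let $H(d,q)$ be the Hamming graph with $d\ge 1$ and $q\ge 3$. Let the distinct adjacency eigenvalues of $H(d,q)$ be $\lambda_i=d(q-1)-qi$ for $i=0,1,\ldots,d$, and its distinct distance eigenvalues be $\mu_0=t=dq^{d-1}(q-1)$, $\mu_1=-q^{d-1}$, $\mu_2=0$. Then the distance eigenvalues of $K_n\otimes H(d,q)$ are $2n-2+nt+\lambda_0$, $2n-2-nq^{d-1}+\lambda_1$, $2n-2+\lambda_i$ for $i=2,3,\ldots,d$, and $\lambda_i-2$ for $i=0,1,\ldots,d$.
   Context: The Hamming graph $H(d,q)$ has as vertices all ordered $d$-tuples over a $q$-element set, two vertices being adjacent if and only if they differ in exactly one coordinate. The Kronecker product $G\otimes H$ of simple graphs $G,H$ has vertex set $V(G)\times V(H)$, with $(x,y)$ adjacent to $(u,v)$ if and only if $xu\in E(G)$ and $yv\in E(H)$. Distance eigenvalues are the eigenvalues of the distance matrix, whose $(u,v)$ entry is the length of a shortest $u$–$v$ path. *)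

(* Defs.v *)
From HB Require Import structures.
From mathcomp Require Import all_boot all_order all_algebra.
Set Implicit Arguments. Unset Strict Implicit. Unset Printing Implicit Defensive.
Import Order.TTheory GRing.Theory Num.Theory.
Local Open Scope ring_scope.

(* Graphs are given as (symmetric, irreflexive) boolean relations on a finType. *)

Definition complete_adj (n : nat) : rel 'I_n := fun x u => x != u.

Definition hamming_adj (d q : nat) : rel {ffun 'I_d -> 'I_q} :=
  fun f g => #|[set i | f i != g i]| == 1%N.

Definition kron_adj (T U : finType) (e : rel T) (e' : rel U) : rel (T * U) :=
  fun xy uv => e xy.1 uv.1 && e' xy.2 uv.2.

Fixpoint reach (T : finType) (e : rel T) (k : nat) (u v : T) : bool :=
  if k is k'.+1 then [exists w, e u w && reach e k' w v] else u == v.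

(* Graph distance: least k with a walk of length k from u to v (a shortest
   walk has length < #|T| when it exists; for disconnected pairs the value
   is #|T|, which never arises for the connected graphs considered here). *)
Definition gdist (T : finType) (e : rel T) (u v : T) : nat :=
  find (fun k => reach e k u v) (iota 0 #|T|).

Definition dist_mx (R : nzRingType) (T : finType) (e : rel T) : 'M[R]_#|T| :=
  \matrix_(i, j) (gdist e (enum_val i) (enum_val j))%:R.

Definition ham_lambda (R : nzRingType) (d q i : nat) : R :=
  (d * (q - 1))%:R - (q * i)%:R.

Definition ham_t (R : nzRingType) (d q : nat) : R :=
  (d * q ^ (d - 1) * (q - 1))%:R.

(* Main.v *)
Require Import Defs.
From HB Require Import structures.
From mathcomp Require Import all_boot all_order all_algebra.
From mathcomp Require Import zify ring lra.
Import Order.TTheory GRing.Theory Num.Theory.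
Set Implicit Arguments. Unset Strict Implicit. Unset Printing Implicit Defensive.
Definition hd d q (y v : {ffun 'I_d -> 'I_q}) : nat := #|[set i | y i != v i]|.

Lemma hdE d q (y v : {ffun 'I_d -> 'I_q}) : hd y v = \sum_i (y i != v i : nat).
Proof.
rewrite /hd -sum1_card big_mkcond /=; apply: eq_bigr => i _.
by rewrite inE; case: (y i != v i).
Qed.

Lemma hd0 d q (y v : {ffun 'I_d -> 'I_q}) : (hd y v == 0) = (y == v).
Proof.
rewrite /hd cards_eq0; apply/eqP/eqP => [H|->].
  apply/ffunP => i; move/setP: H => /(_ i); rewrite !inE.
  by move/negbFE/eqP.
by apply/setP => i; rewrite !inE eqxx.
Qed.

Lemma hd_le d q (y v : {ffun 'I_d -> 'I_q}) : hd y v <= d.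
Proof. by apply: leq_trans (max_card _) _; rewrite card_ord. Qed.

Lemma hd_sym d q (y v : {ffun 'I_d -> 'I_q}) : hd y v = hd v y.
Proof. by rewrite !hdE; apply: eq_bigr => i _; rewrite eq_sym. Qed.

Lemma hd_tri d q (y w v : {ffun 'I_d -> 'I_q}) : hd y v <= hd y w + hd w v.
Proof.
rewrite !hdE -big_split /=; apply: leq_sum => i _.
by case: (y i =P v i); case: (y i =P w i); case: (w i =P v i) => // -> ->.
Qed.

Definition upd d q (y : {ffun 'I_d -> 'I_q}) c a : {ffun 'I_d -> 'I_q} :=
  [ffun i => if i == c then a else y i].

Lemma hd_upd d q (y v : {ffun 'I_d -> 'I_q}) c a :
  hd (upd y c a) v + (y c != v c) = hd y v + (a != v c).
Proof.
rewrite !hdE (bigD1 c) //= [in RHS](bigD1 c) //= ffunE eqxx.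
rewrite (eq_bigr (fun i => (y i != v i) : nat)); last first.
by move=> i /negbTE Hi; rewrite ffunE Hi. by rewrite addnAC [in RHS]addnC addnA.
Qed.

Lemma hd_upd_l d q (y : {ffun 'I_d -> 'I_q}) c a : hd y (upd y c a) = (y c != a).
Proof.
rewrite hdE (bigD1 c) //= ffunE eqxx big1 ?addn0 // => i /negbTE Hi.
by rewrite ffunE Hi eqxx.
Qed.

Lemma ex_neq2 m (x u : 'I_m) : 3 <= m -> exists w : 'I_m, (w != x) && (w != u).
Proof.
move=> m3.
have : 0 < #|~: [set x; u]|.
  have := cardsC [set x; u]; rewrite card_ord; have := cards2 x u; case: (x != u) => /= ->; lia.
case/card_gt0P => w; rewrite !inE negb_or => H; by exists w.
Qed.

Lemma reach_kron (T U : finType) (eK : rel T) (eH : rel U) k x y u v :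
  reach (kron_adj eK eH) k (x, y) (u, v) = reach eK k x u && reach eH k y v.
Proof.
elim: k x y => [|k IH] x y /=; first by rewrite xpair_eqE.
apply/existsP/andP => [[[w1 w2] /andP[/andP[H1 H2]]] | [/existsP[w1 /andP[H1 H3]] /existsP[w2 /andP[H2 H4]]]].
  by rewrite IH => /andP[H3 H4]; split; apply/existsP; [exists w1|exists w2]; rewrite ?H1 ?H2.
by exists (w1, w2); rewrite /kron_adj /= H1 H2 IH H3 H4.
Qed.

Lemma reach_K n k (x u : 'I_n) : 3 <= n ->
  reach (@complete_adj n) k x u =
  (if k is k'.+1 then (if k' is 0 then x != u else true) else x == u).
Proof.
move=> n3; elim: k x => [|k IH] x //=.
case: k IH => [|[|k]] IH.
- apply/existsP/idP => [[w /andP[H /eqP<-]] // | H].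
  by exists u; rewrite /complete_adj H /= eqxx.
- apply/existsP; case: (ex_neq2 x u n3) => w /andP[H1 H2]; exists w.
  by rewrite /complete_adj eq_sym H1 IH.
- apply/existsP; case: (ex_neq2 x x n3) => w /andP[H1 _]; exists w.
  by rewrite /complete_adj eq_sym H1 IH.
Qed.

Lemma reach_H d q k (y v : {ffun 'I_d -> 'I_q}) : 0 < d -> 3 <= q ->
  reach (@hamming_adj d q) k y v =
  (if k is k'.+1 then (if k' is 0 then hd y v == 1 else hd y v <= k) else y == v).
Proof.
move=> d0 q3; elim: k y => [|k IH] y //=.
have adjE : forall y w, hamming_adj y w = (hd y w == 1) by [].
case: k IH => [|k] IH.
- apply/existsP/idP => [[w /andP[H /eqP<-]] // | H].
  by exists v; rewrite adjE H /= eqxx.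
apply/existsP/idP.
  case=> w /andP[H1]; rewrite IH => H2.
  have Hw : hd w v <= k.+1.
    by case: k IH H2 => [|k] IH H2; [move/eqP: H2 => ->|].
  have := hd_tri y w v; rewrite adjE in H1; move/eqP: H1 => H1; lia.
move=> H; case: (posnP (hd y v)) => [/eqP|] Hyv.
  rewrite hd0 in Hyv; move/eqP: Hyv => Hyv; subst y.
  pose c := Ordinal d0; case: (ex_neq2 (v c) (v c) q3) => a /andP[Ha _].
  exists (upd v c a); rewrite adjE hd_upd_l [v c == a]eq_sym Ha IH hd_sym hd_upd_l [v c == a]eq_sym Ha.
  by case: k {IH H}.
have [c Hc] : exists c, y c != v c.
  have /card_gt0P[c] : 0 < #|[set i | y i != v i]| by [].
  by rewrite inE => Hc; exists c.
case: (boolP ((k == 0) && (hd y v == 1))) => [/andP[/eqP k0 /eqP h1]|Hn].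
  subst k; case: (ex_neq2 (y c) (v c) q3) => a /andP[Ha1 Ha2].
  exists (upd y c a); rewrite adjE hd_upd_l [y c == a]eq_sym Ha1 IH /=.
  have := hd_upd y v c a; rewrite Hc Ha2 h1 /= => E.
  apply/eqP; lia.
exists (upd y c (v c)); rewrite adjE hd_upd_l Hc IH /=.
have := hd_upd y v c (v c); rewrite Hc eqxx /= => E.
case: k IH H Hn => [|k] IH H Hn.
  rewrite /= in Hn; apply/eqP; lia.
lia.
Qed.

Definition ddist n d q (a b : 'I_n * {ffun 'I_d -> 'I_q}) : nat :=
  let h := hd a.2 b.2 in
  if a.1 == b.1 then (if h == 0 then 0 else if h == 1 then 2 else h)
  else (if h == 0 then 2 else h).

Lemma find_iota_min (P : pred nat) m N :
  P m -> (forall k, k < m -> ~~ P k) -> m < N -> find P (iota 0 N) = m.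
Proof.
move=> Pm Hlt mN; rewrite -(subnKC (ltnW mN)) iotaD find_cat.
have -> : has P (iota 0 m) = false.
  apply/hasPn => k; rewrite mem_iota add0n; exact: Hlt.
case E: (N - m) => [|k]; first lia. by rewrite size_iota /= add0n Pm addn0.
Qed.

Lemma gdist_kron n d q (a b : 'I_n * {ffun 'I_d -> 'I_q}) :
  3 <= n -> 0 < d -> 3 <= q ->
  gdist (kron_adj (@complete_adj n) (@hamming_adj d q)) a b = ddist a b.
Proof.
move=> n3 d0 q3; case: a b => x y [u v]; rewrite /gdist /ddist /=.
have hle := hd_le y v.
have Hcard : #|{: 'I_n * {ffun 'I_d -> 'I_q}}| = n * q ^ d.
  by rewrite card_prod card_ffun !card_ord.
have qd : d < q ^ d by apply: ltn_expl; lia.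
apply: find_iota_min.
- rewrite reach_kron reach_K // reach_H // -hd0.
  move: (hd y v) hle => h hle; case: (x == u); case: h hle => [|[|h]] //= hle.
  all: try by rewrite ?leqnn.
- move=> k; rewrite reach_kron reach_K // reach_H // -hd0.
  move: (hd y v) hle => h hle; case: (x == u); case: h hle => [|[|h]] //= hle;
  case: k => [|[|k]] //= Hk; rewrite -?ltnNge; lia.
- rewrite Hcard; have : n * d.+1 <= n * q ^ d by rewrite leq_mul2l qd orbT.
  move: (hd y v) hle => h hle; case: (x == u); case: (h == 0); case: (h == 1); nia.
Qed.

Local Open Scope ring_scope.

Definition mx (R : numFieldType) (T : finType) (F : T -> T -> R) : 'M[R]_#|T| :=
  \matrix_(i, j) F (enum_val i) (enum_val j).

Definition kmul (R : numFieldType) (T : finType) (F G : T -> T -> R) :=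
  fun a b => \sum_c F a c * G c b.

Lemma mx_mul (R : numFieldType) (T : finType) (F G : T -> T -> R) :
  mx F *m mx G = mx (kmul F G).
Proof.
apply/matrixP => i j; rewrite !mxE /kmul.
rewrite (reindex (@enum_val T predT)) /=; last first.
  by exists enum_rank => x _; [rewrite enum_valK | rewrite enum_rankK].
by apply: eq_bigr => k _; rewrite !mxE.
Qed.

Definition tens (R : numFieldType) n d q (M : 'I_n -> 'I_n -> R)
  (Ms : 'I_d -> 'I_q -> 'I_q -> R) : ('I_n * {ffun 'I_d -> 'I_q}) -> ('I_n * {ffun 'I_d -> 'I_q}) -> R :=
  fun a b => M a.1 b.1 * \prod_c Ms c (a.2 c) (b.2 c).

Lemma kmul_tens (R : numFieldType) n d q M N Ms Ns a b :
  kmul (@tens R n d q M Ms) (tens N Ns) a b =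
  tens (kmul M N) (fun c => kmul (Ms c) (Ns c)) a b.
Proof.
case: a b => x y [u v]; rewrite /kmul /tens /=.
rewrite -(pair_bigA _ (fun (x' : 'I_n) (y' : {ffun 'I_d -> 'I_q}) => M x x' * (\prod_c Ms c (y c) (y' c)) *
   (N x' u * \prod_c Ns c (y' c) (v c)))) /= mulr_suml.
apply: eq_bigr => x' _; rewrite bigA_distr_bigA /= mulr_sumr.
apply: eq_bigr => y' _; rewrite big_split /=.
by rewrite mulrACA.
Qed.

Lemma tmx_mul (R : numFieldType) n d q A B X As Bs Xs (s : R) (sc : 'I_d -> R) :
  (forall a b, kmul A B a b = s * X a b) ->
  (forall c a b, kmul (As c) (Bs c) a b = sc c * Xs c a b) ->
  mx (@tens R n d q A As) *m mx (tens B Bs) = (s * \prod_c sc c) *: mx (tens X Xs).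
Proof.
move=> H1 H2; rewrite mx_mul; apply/matrixP => i j; rewrite !mxE kmul_tens /tens H1.
under eq_bigr do rewrite H2.
by rewrite big_split /= mulrACA.
Qed.

Definition Jm (R : numFieldType) m : 'I_m -> 'I_m -> R := fun _ _ => 1.
Definition Im (R : numFieldType) m : 'I_m -> 'I_m -> R := fun a b => (a == b)%:R.
Definition JIm (R : numFieldType) m : 'I_m -> 'I_m -> R := fun a b => 1 - (a == b)%:R.
Definition Fm (R : numFieldType) m (s : bool) : 'I_m -> 'I_m -> R :=
  fun a b => if s then (a == b)%:R - (m%:R)^-1 else (m%:R)^-1.
Definition sJ (R : numFieldType) m (s : bool) : R := if s then 0 else m%:R.
Arguments Jm : clear implicits. Arguments Im : clear implicits. Arguments JIm : clear implicits.
Arguments Fm : clear implicits. Arguments sJ : clear implicits.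

Lemma kmul_IF (R : numFieldType) m (F : 'I_m -> 'I_m -> R) a b :
  kmul (Im R m) F a b = 1 * F a b.
Proof.
rewrite /kmul (bigD1 a) //= /Im eqxx !mul1r big1 ?addr0 // => c /negbTE.
by rewrite eq_sym => ->; rewrite mul0r.
Qed.

Lemma kmul_FI (R : numFieldType) m (F : 'I_m -> 'I_m -> R) a b :
  kmul F (Im R m) a b = 1 * F a b.
Proof.
rewrite /kmul (bigD1 b) //= /Im eqxx !mulr1 mul1r big1 ?addr0 // => c /negbTE.
by move=> ->; rewrite mulr0.
Qed.

Lemma sum_delta (R : numFieldType) m (b : 'I_m) : \sum_c ((c == b)%:R : R) = 1.
Proof.
by rewrite (bigD1 b) //= eqxx big1 ?addr0 // => c /negbTE ->.
Qed.

Lemma kmul_JF (R : numFieldType) m s a b : (0 < m)%N ->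
  kmul (Jm R m) (Fm R m s) a b = sJ R m s * Fm R m s a b.
Proof.
move=> m0; have mn0 : (m%:R : R) != 0 by rewrite pnatr_eq0 -lt0n.
rewrite /kmul /Jm /sJ /Fm; under eq_bigr do rewrite mul1r.
case: s; last by rewrite sumr_const card_ord mulr_natl.
rewrite sumrB sum_delta sumr_const card_ord -[_ *+ m]mulr_natr mulVf // subrr mul0r //.
Qed.

Lemma kmul_FJ (R : numFieldType) m s a b : (0 < m)%N ->
  kmul (Fm R m s) (Jm R m) a b = sJ R m s * Fm R m s a b.
Proof.
move=> m0; have mn0 : (m%:R : R) != 0 by rewrite pnatr_eq0 -lt0n.
rewrite /kmul /Jm /sJ /Fm; under eq_bigr do rewrite mulr1.
case: s; last by rewrite sumr_const card_ord mulr_natl.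
rewrite sumrB (eq_bigr (fun c => ((c == a)%:R : R))); last by move=> c _; rewrite eq_sym.
rewrite sum_delta sumr_const card_ord -[_ *+ m]mulr_natr mulVf // subrr mul0r //.
Qed.

Lemma kmul_JIF (R : numFieldType) m s a b : (0 < m)%N ->
  kmul (JIm R m) (Fm R m s) a b = (sJ R m s - 1) * Fm R m s a b.
Proof.
move=> m0; have E : kmul (JIm R m) (Fm R m s) a b = kmul (Jm R m) (Fm R m s) a b - kmul (Im R m) (Fm R m s) a b.
  by rewrite /kmul -sumrB; apply: eq_bigr => c _; rewrite /JIm /Jm /Im mulrBl.
by rewrite E kmul_JF // kmul_IF mulrBl.
Qed.

Lemma kmul_FJI (R : numFieldType) m s a b : (0 < m)%N ->
  kmul (Fm R m s) (JIm R m) a b = (sJ R m s - 1) * Fm R m s a b.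
Proof.
move=> m0; have E : kmul (Fm R m s) (JIm R m) a b = kmul (Fm R m s) (Jm R m) a b - kmul (Fm R m s) (Im R m) a b.
  by rewrite /kmul -sumrB; apply: eq_bigr => c _; rewrite /JIm /Jm /Im mulrBr.
by rewrite E kmul_FJ // kmul_FI mulrBl.
Qed.

Notation VT n d q := ('I_n * {ffun 'I_d -> 'I_q})%type.

Definition Dexpr (R : numFieldType) n d q : 'M[R]_#|{: VT n d q}| :=
  d%:R *: mx (@tens R n d q (Jm R n) (fun _ => Jm R q))
  - \sum_(c < d) mx (@tens R n d q (Jm R n) (fun c' => if c' == c then Im R q else Jm R q))
  + 2 *: mx (@tens R n d q (Jm R n) (fun _ => Im R q))
  - 2 *: mx (@tens R n d q (Im R n) (fun _ => Im R q))
  + \sum_(c < d) mx (@tens R n d q (Im R n) (fun c' => if c' == c then JIm R q else Im R q)).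

Lemma prod_dl (R : numFieldType) d q (c : 'I_d) (A B : 'I_q -> 'I_q -> R) (y v : {ffun 'I_d -> 'I_q}) :
  \prod_c' (if c' == c then A else B) (y c') (v c') =
  A (y c) (v c) * \prod_(c' | c' != c) B (y c') (v c').
Proof.
by rewrite (bigD1 c) //= eqxx; congr (_ * _); apply: eq_bigr => c' /negbTE ->.
Qed.

Lemma prod_bool (R : numFieldType) (I : finType) (P : pred I) :
  \prod_i ((P i)%:R : R) = ([forall i, P i])%:R.
Proof.
case: (pickP (fun i => ~~ P i)) => [i Hi|H].
  rewrite (bigD1 i) //= (negbTE Hi) mul0r.
  case: forallP => // /(_ i) Pi; by rewrite Pi in Hi.
rewrite big1; last by move=> i _; have := H i; case: (P i).
have -> : [forall i, P i] by apply/forallP => i; have := H i; case: (P i).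
by [].
Qed.

Lemma prod_eqf (R : numFieldType) d q (y v : {ffun 'I_d -> 'I_q}) :
  \prod_c (((y c == v c))%:R : R) = (y == v)%:R.
Proof.
rewrite prod_bool; have -> : [forall c, y c == v c] = (y == v); last by []. apply/forallP/eqP => [H|-> c //].
by apply/ffunP => c; apply/eqP.
Qed.

Lemma sum_hd1 (R : numFieldType) d q (y v : {ffun 'I_d -> 'I_q}) :
  \sum_c ((1 - (y c == v c)%:R) * \prod_(c' | c' != c) (y c' == v c')%:R : R) = (hd y v == 1)%:R.
Proof.
have E : forall c, (1 - (y c == v c)%:R) * \prod_(c' | c' != c) (y c' == v c')%:R
     = (([set i | y i != v i] == [set c])%:R : R).
  move=> c; have -> : 1 - ((y c == v c)%:R : R) = (y c != v c)%:R.
    by case: eqP; rewrite ?subrr ?subr0.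
  have F : \prod_c' ((if c' == c then y c' != v c' else y c' == v c')%:R : R) =
     (y c != v c)%:R * \prod_(c' | c' != c) (y c' == v c')%:R.
    by rewrite (bigD1 c) //= eqxx; congr (_ * _); apply: eq_bigr => c' /negbTE ->.
  rewrite -F prod_bool.
  have -> : [forall c', if c' == c then y c' != v c' else y c' == v c'] =
            ([set i | y i != v i] == [set c]); last by [].
  apply/forallP/eqP => [H|H c'].
    apply/setP => i; rewrite !inE; have := H i; case: (i == c) => //.
    by move/eqP => ->; rewrite eqxx.
  move/setP/(_ c'): H; rewrite !inE; case: (c' == c) => //.
  by move/negbT; rewrite negbK.
rewrite (eq_bigr _ (fun c _ => E c)).
rewrite /hd; case: cards1P => [[c0 ->]|Hn].
  rewrite (bigD1 c0) //= eqxx big1 ?addr0 // => c Hc.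
  by rewrite (inj_eq set1_inj) eq_sym (negbTE Hc).
rewrite big1 // => c _; case: eqP => // Hc; case: Hn; by exists c.
Qed.

Lemma sum_eqc (R : numFieldType) d q (y v : {ffun 'I_d -> 'I_q}) :
  d%:R - \sum_c ((y c == v c)%:R : R) = (hd y v)%:R.
Proof.
rewrite hdE natr_sum -{1}(card_ord d) -sumr_const -sumrB.
by apply: eq_bigr => c _; case: eqP; rewrite ?subrr ?subr0.
Qed.

Lemma Dmat_E (R : numFieldType) n d q : (3 <= n)%N -> (0 < d)%N -> (3 <= q)%N ->
  dist_mx R (kron_adj (@complete_adj n) (@hamming_adj d q)) = Dexpr R n d q.
Proof.
move=> n3 d0 q3; apply/matrixP => i j.
rewrite /dist_mx /Dexpr !mxE !summxE.
under [in RHS]eq_bigr do rewrite mxE.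
under [X in _ = _ + X]eq_bigr do rewrite mxE.
rewrite gdist_kron //.
move: (enum_val i) (enum_val j) => [x y] [u v].
rewrite /tens /= /Jm /Im.
rewrite big1_eq mulr1 mul1r.
under eq_bigr do rewrite prod_dl /= big1_eq mulr1 mul1r.
under [X in _ = _ + X]eq_bigr do rewrite prod_dl /=.
rewrite -mulr_sumr /JIm sum_hd1 prod_eqf -hd0 mulr1 sum_eqc.
rewrite /ddist /=; move: (hd y v) => h.
case: (x == u); case: h => [|[|h]] /=; rewrite ?mul1r ?mul0r ?mulr0 ?mulr1 ?subr0 ?addr0; try ring.
Qed.


Definition Cm (R : numFieldType) n d q (T : bool) (S : {ffun 'I_d -> bool}) :=
  mx (@tens R n d q (Fm R n T) (fun c => Fm R q (S c))).

Definition scal (R : numFieldType) n d q (T : bool) (S : {ffun 'I_d -> bool}) : R :=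
  d%:R * (sJ R n T * \prod_c sJ R q (S c))
  - \sum_(c < d) (sJ R n T * \prod_c' (if c' == c then 1 else sJ R q (S c')))
  + 2 * (sJ R n T * \prod_(c < d) 1)
  - 2 * (1 * \prod_(c < d) 1)
  + \sum_(c < d) (1 * \prod_c' (if c' == c then sJ R q (S c') - 1 else 1)).

Arguments Cm : clear implicits. Arguments scal : clear implicits. Arguments Dexpr : clear implicits.

Lemma kmul_dl1 (R : numFieldType) m (b : bool) s a a' : (0 < m)%N ->
  kmul (if b then Im R m else Jm R m) (Fm R m s) a a' =
  (if b then 1 else sJ R m s) * Fm R m s a a'.
Proof. by case: b => m0; [rewrite kmul_IF | rewrite kmul_JF]. Qed.

Lemma kmul_dl2 (R : numFieldType) m (b : bool) s a a' : (0 < m)%N ->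
  kmul (if b then JIm R m else Im R m) (Fm R m s) a a' =
  (if b then sJ R m s - 1 else 1) * Fm R m s a a'.
Proof. by case: b => m0; [rewrite kmul_JIF | rewrite kmul_IF]. Qed.

Lemma kmul_dl1' (R : numFieldType) m (b : bool) s a a' : (0 < m)%N ->
  kmul (Fm R m s) (if b then Im R m else Jm R m) a a' =
  (if b then 1 else sJ R m s) * Fm R m s a a'.
Proof. by case: b => m0; [rewrite kmul_FI | rewrite kmul_FJ]. Qed.

Lemma kmul_dl2' (R : numFieldType) m (b : bool) s a a' : (0 < m)%N ->
  kmul (Fm R m s) (if b then JIm R m else Im R m) a a' =
  (if b then sJ R m s - 1 else 1) * Fm R m s a a'.
Proof. by case: b => m0; [rewrite kmul_FJI | rewrite kmul_FI]. Qed.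

Lemma DC (R : numFieldType) n d q T S : (0 < n)%N -> (0 < q)%N ->
  Dexpr R n d q *m Cm R n d q T S = scal R n d q T S *: Cm R n d q T S.
Proof.
move=> n0 q0; rewrite /Dexpr /Cm !mulmxDl ?mulNmx !mulmx_suml -!scalemxAl.
rewrite (tmx_mul (fun a b => kmul_JF R T a b n0) (fun c a b => kmul_JF R (S c) a b q0)).
rewrite (tmx_mul (fun a b => kmul_JF R T a b n0) (fun c a b => kmul_IF (Fm R q (S c)) a b)).
rewrite (tmx_mul (fun a b => kmul_IF (Fm R n T) a b) (fun c a b => kmul_IF (Fm R q (S c)) a b)).
rewrite (eq_bigr (fun c => (sJ R n T * \prod_c' (if c' == c then 1 else sJ R q (S c'))) *:
   mx (tens (Fm R n T) (fun c => Fm R q (S c))))); last first.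
  by move=> c _; apply: tmx_mul => [a b|c' a b]; [exact: kmul_JF | exact: kmul_dl1].
rewrite [X in _ + X](eq_bigr (fun c => (1 * \prod_c' (if c' == c then sJ R q (S c') - 1 else 1)) *:
   mx (tens (Fm R n T) (fun c => Fm R q (S c))))); last first.
  by move=> c _; apply: tmx_mul => [a b|c' a b]; [exact: kmul_IF | exact: kmul_dl2].
by rewrite -!scaler_suml !scalerA /scal !scalerDl ?scaleNr.
Qed.

Lemma CD (R : numFieldType) n d q T S : (0 < n)%N -> (0 < q)%N ->
  Cm R n d q T S *m Dexpr R n d q = scal R n d q T S *: Cm R n d q T S.
Proof.
move=> n0 q0; rewrite /Dexpr /Cm !mulmxDr ?mulmxN !mulmx_sumr -!scalemxAr.
rewrite (tmx_mul (fun a b => kmul_FJ R T a b n0) (fun c a b => kmul_FJ R (S c) a b q0)).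
rewrite (tmx_mul (fun a b => kmul_FJ R T a b n0) (fun c a b => kmul_FI (Fm R q (S c)) a b)).
rewrite (tmx_mul (fun a b => kmul_FI (Fm R n T) a b) (fun c a b => kmul_FI (Fm R q (S c)) a b)).
rewrite (eq_bigr (fun c => (sJ R n T * \prod_c' (if c' == c then 1 else sJ R q (S c'))) *:
   mx (tens (Fm R n T) (fun c => Fm R q (S c))))); last first.
  by move=> c _; apply: tmx_mul => [a b|c' a b]; [exact: kmul_FJ | exact: kmul_dl1'].
rewrite [X in _ + X](eq_bigr (fun c => (1 * \prod_c' (if c' == c then sJ R q (S c') - 1 else 1)) *:
   mx (tens (Fm R n T) (fun c => Fm R q (S c))))); last first.
  by move=> c _; apply: tmx_mul => [a b|c' a b]; [exact: kmul_FI | exact: kmul_dl2'].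
by rewrite -!scaler_suml !scalerA /scal !scalerDl ?scaleNr.
Qed.

Lemma sumC (R : numFieldType) n d q : (0 < n)%N -> (0 < q)%N ->
  \sum_(j : bool * {ffun 'I_d -> bool}) Cm R n d q j.1 j.2 = 1%:M.
Proof.
move=> n0 q0; apply/matrixP => i j; rewrite summxE !mxE.
under eq_bigr do rewrite mxE.
rewrite -(inj_eq enum_val_inj).
move: (enum_val i) (enum_val j) => [x y] [u v].
rewrite /tens /= -(pair_bigA _ (fun (T : bool) (S : {ffun 'I_d -> bool}) =>
   Fm R n T x u * \prod_c Fm R q (S c) (y c) (v c))) /=.
under eq_bigr do rewrite -mulr_sumr.
rewrite -mulr_suml -(bigA_distr_bigA (fun (c : 'I_d) (s : bool) => Fm R q s (y c) (v c))) /=.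
rewrite big_bool /= /Fm subrK.
under eq_bigr do rewrite big_bool /= subrK.
by rewrite prod_eqf xpair_eqE -mulnb natrM.
Qed.

Lemma Fm_diag (R : numFieldType) m s (a : 'I_m) : (1 < m)%N -> Fm R m s a a != 0.
Proof.
move=> m1; rewrite /Fm eqxx; case: s.
  rewrite subr_eq0 eq_sym invr_eq1 pnatr_eq1; lia.
by rewrite invr_eq0 pnatr_eq0; lia.
Qed.

Lemma Cm_diag (R : numFieldType) n d q T S (i : 'I_#|{: VT n d q}|) :
  (1 < n)%N -> (1 < q)%N -> Cm R n d q T S i i != 0.
Proof.
move=> n1 q1; rewrite /Cm mxE /tens mulf_neq0 ?Fm_diag //.
by apply/prodf_neq0 => c _; rewrite Fm_diag.
Qed.

Definition kS d (S : {ffun 'I_d -> bool}) := #|[set c | S c]|.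

Lemma kSE d (S : {ffun 'I_d -> bool}) : kS S = \sum_c (S c : nat).
Proof.
rewrite /kS -sum1_card big_mkcond /=; apply: eq_bigr => i _.
by rewrite inE; case: (S i).
Qed.

Lemma kS_le d (S : {ffun 'I_d -> bool}) : (kS S <= d)%N.
Proof. by apply: leq_trans (max_card _) _; rewrite card_ord. Qed.

Lemma prod_constC (R : numFieldType) d (c : 'I_d) (x : R) :
  \prod_(c' | c' != c) x = x ^+ (d - 1).
Proof.
rewrite (eq_bigl (fun c' => c' \in [set~ c])); last by move=> c'; rewrite !inE.
by rewrite prodr_const cardsC1 card_ord subn1.
Qed.

Lemma L1 (R : numFieldType) d q (S : {ffun 'I_d -> bool}) :
  \prod_c sJ R q (S c) = if kS S == 0%N then q%:R ^+ d else 0.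
Proof.
rewrite /kS; case: (boolP (#|[set c | S c]| == 0%N)) => H.
  rewrite (eq_bigr (fun _ => q%:R)) ?prodr_const ?card_ord //.
  move=> c _; move: H; rewrite cards_eq0 => /eqP/setP/(_ c); rewrite !inE /sJ.
  by move=> ->.
have /card_gt0P[c] : (0 < #|[set c | S c]|)%N by rewrite lt0n.
rewrite inE => Sc; by rewrite (bigD1 c) //= /sJ Sc mul0r.
Qed.

Lemma L2t (R : numFieldType) d q (S : {ffun 'I_d -> bool}) c :
  \prod_c' (if c' == c then 1 else sJ R q (S c')) =
  if [set c | S c] \subset [set c] then q%:R ^+ (d - 1) else 0.
Proof.
case: (boolP ([set c | S c] \subset [set c])) => H.
  rewrite (bigD1 c) //= eqxx mul1r -(prod_constC c); apply: eq_bigr => c' Hc'.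
  rewrite (negbTE Hc') /sJ; case Sc': (S c') => //.
  have : c' \in [set c] by apply: (subsetP H); rewrite inE.
  by rewrite inE (negbTE Hc').
case/subsetPn: H => c' ; rewrite !inE => Sc' Hc'.
by rewrite (bigD1 c') //= (negbTE Hc') /sJ Sc' mul0r.
Qed.

Lemma L2 (R : numFieldType) d q (S : {ffun 'I_d -> bool}) :
  \sum_c \prod_c' (if c' == c then 1 else sJ R q (S c')) =
  if kS S == 0%N then d%:R * q%:R ^+ (d - 1)
  else if kS S == 1%N then q%:R ^+ (d - 1) else 0.
Proof.
under eq_bigr do rewrite L2t.
rewrite /kS; case: (boolP (#|[set c | S c]| == 0%N)) => H0.
  move: H0; rewrite cards_eq0 => /eqP ->.
  by rewrite (eq_bigr (fun _ => q%:R ^+ (d - 1))) ?sumr_const ?card_ord ?mulr_natl // => c _; rewrite sub0set.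
case: cards1P => [[c0 ->]|H1].
  rewrite (bigD1 c0) //= sub1set inE eqxx big1 ?addr0 // => c Hc.
  by rewrite sub1set inE eq_sym (negbTE Hc).
rewrite big1 // => c _; case: ifP => // Hs.
have := subset_leq_card Hs; rewrite cards1 leq_eqVlt ltnS leqn0 (negbTE H0) orbF.
by move=> H; case: H1; apply/cards1P.
Qed.

Lemma L3 (R : numFieldType) d q (S : {ffun 'I_d -> bool}) : (0 < q)%N ->
  \sum_c \prod_c' (if c' == c then sJ R q (S c') - 1 else 1) =
  (d * (q - 1))%:R - (q * kS S)%:R.
Proof.
move=> q0.
have E : forall c, \prod_c' (if c' == c then sJ R q (S c') - 1 else 1) =
   (q - 1)%:R - (q * S c)%:R.
  move=> c; rewrite (bigD1 c) //= eqxx big1 ?mulr1; last by move=> c' /negbTE ->.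
  by rewrite /sJ natrB //; case: (S c); rewrite ?muln1 ?muln0 ?subr0 ?sub0r ?add0r; [ring|].
rewrite (eq_bigr _ (fun c _ => E c)) sumrB sumr_const card_ord -[_ *+ d]mulr_natr -natrM mulnC.
by rewrite kSE big_distrr /= natr_sum.
Qed.

Lemma scal_val (R : numFieldType) n d q T S : (0 < q)%N ->
  scal R n d q T S = if T then ham_lambda R d q (kS S) - 2
   else 2 * n%:R - 2 + n%:R * (d%:R * (if kS S == 0%N then q%:R ^+ d else 0)
        - (if kS S == 0%N then d%:R * q%:R ^+ (d - 1)
           else if kS S == 1%N then q%:R ^+ (d - 1) else 0)) + ham_lambda R d q (kS S).
Proof.
move=> q0; rewrite /scal L1 -mulr_sumr L2 !big1_eq.
under [X in _ + X]eq_bigr do rewrite mul1r.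
rewrite L3 // /ham_lambda; case: T; rewrite /sJ;
  set A := (if kS S == 0%N then q%:R ^+ d else 0);
  set B := (if kS S == 0%N then d%:R * _ else _);
  set L := ((d * (q - 1))%:R); set K := ((q * kS S)%:R); ring.
Qed.

Lemma ham_tE (R : numFieldType) d q : (0 < d)%N -> (0 < q)%N ->
  ham_t R d q = d%:R * q%:R ^+ d - d%:R * q%:R ^+ (d - 1).
Proof.
case: d => // d' _ q0; rewrite /ham_t subn1 /= !natrM natrX natrB // exprS; ring.
Qed.

Lemma kS_Sk d k : (k <= d)%N -> kS [ffun c : 'I_d => (c < k)%N] = k.
Proof.
move=> kd; rewrite kSE.
rewrite (eq_bigr (fun c : 'I_d => if (c < k)%N then 1%N else 0%N)); last first.
  by move=> c _; rewrite ffunE; case: (c < k)%N.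
rewrite -big_mkcond -(big_ord_widen _ (fun _ => 1%N) kd).
by rewrite sum_nat_const card_ord muln1.
Qed.

Lemma rowZ' (R : numFieldType) m (i : 'I_m) (a : R) (A : 'M[R]_m) : row i (a *: A) = a *: row i A.
Proof. by apply/rowP => j; rewrite !mxE. Qed.

Lemma eig_of (R : numFieldType) n d q T S (x : R) : (3 <= n)%N -> (0 < d)%N -> (3 <= q)%N ->
  x = scal R n d q T S ->
  eigenvalue (dist_mx R (kron_adj (@complete_adj n) (@hamming_adj d q))) x.
Proof.
move=> n3 d0 q3 ->; rewrite Dmat_E //.
have n0 : (0 < n)%N by lia.
have q0 : (0 < q)%N by lia.
pose i0 := enum_rank ((Ordinal n0, [ffun _ => Ordinal q0]) : VT n d q).
apply/eigenvalueP; exists (row i0 (Cm R n d q T S)).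
  by rewrite -row_mul CD // rowZ'.
apply/eqP => /rowP/(_ i0); rewrite !mxE => /eqP.
have := @Cm_diag R n d q T S i0; rewrite /Cm mxE => H; apply/negP; apply: H; lia.
Qed.

Theorem theorem4p7 (R : numFieldType) (n d q : nat) :
  (3 <= n)%N -> (1 <= d)%N -> (3 <= q)%N ->
  forall x : R,
    eigenvalue (dist_mx R (kron_adj (@complete_adj n) (@hamming_adj d q))) x <->
    [\/ x = 2 * n%:R - 2 + n%:R * ham_t R d q + ham_lambda R d q 0,
        x = 2 * n%:R - 2 - n%:R * (q ^ (d - 1))%:R + ham_lambda R d q 1,
        (exists2 i : nat, (2 <= i <= d)%N & x = 2 * n%:R - 2 + ham_lambda R d q i)
      | (exists2 i : nat, (i <= d)%N & x = ham_lambda R d q i - 2)].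
Proof.
move=> n3 d1 q3 x.
have n0 : (0 < n)%N by lia.
have q0 : (0 < q)%N by lia.
split.
  rewrite Dmat_E //; case/eigenvalueP => v Hv vn0.
  have [[T S] /= HT] : exists j : bool * {ffun 'I_d -> bool}, v *m Cm R n d q j.1 j.2 != 0.
    case: (pickP (fun j : bool * {ffun 'I_d -> bool} => v *m Cm R n d q j.1 j.2 != 0)) => [j Hj|H].
      by exists j.
    case/negP: vn0; rewrite -[v]mulmx1 -(sumC R d n0 q0) mulmx_sumr; apply/eqP.
    by apply: big1 => j _; move/negbT: (H j); rewrite negbK => /eqP.
  have Ex : x = scal R n d q T S.
    have := congr1 (mulmx^~ (Cm R n d q T S)) Hv.
    rewrite -mulmxA DC // -scalemxAl -scalemxAr => /eqP.
    rewrite eq_sym -subr_eq0 -scalerBl scalemx_eq0 (negbTE HT) orbF subr_eq0.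
    by move/eqP.
  rewrite Ex scal_val //; have kd := kS_le S; clear HT Hv Ex.
  case: T.
    by apply: Or44; exists (kS S).
  case: eqP => [k0|/eqP k0].
    apply: Or41; rewrite k0 ham_tE //; ring.
  case: eqP => [k1|/eqP k1].
    apply: Or42; rewrite k1 natrX; ring.
  apply: Or43; exists (kS S); first by apply/andP; split => //; lia.
  ring.
have Hk : forall k, (k <= d)%N -> kS [ffun c : 'I_d => (c < k)%N] = k by move=> k; apply: kS_Sk.
case.
- move=> ->; apply: (@eig_of R n d q false [ffun c : 'I_d => (c < 0)%N]) => //.
  rewrite scal_val // Hk // eqxx ham_tE //; ring.
- move=> ->; apply: (@eig_of R n d q false [ffun c : 'I_d => (c < 1)%N]) => //.
  rewrite scal_val // Hk // /= natrX; ring.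
- case=> i /andP[i2 id] ->; apply: (@eig_of R n d q false [ffun c : 'I_d => (c < i)%N]) => //.
  rewrite scal_val // Hk //.
  have -> : (i == 0)%N = false by lia.
  have -> : (i == 1)%N = false by lia.
  ring.
- case=> i id ->; apply: (@eig_of R n d q true [ffun c : 'I_d => (c < i)%N]) => //.
  by rewrite scal_val // Hk.
Qed.
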